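(* Consider the discrete all-pay auction in the model without ties, with values drawn i.i.d. from a distribution with full support on $X$. Let $\beta$ be a symmetric equilibrium bidding function, let $v\in X$ with $v+1\in X$, and let $b=\beta(v)$. Then $\beta(v+1)\le b+1$.
   Context: Model. There are $n\ge 2$ risk-neutral bidders competing for one indivisible object. Normalise the grid so that values and bids lie in $X=\{0,1,2,\dots,x\}$ for some $x\in\mathbb N$. Each bidder $i$ privately learns a value $v_i\in X$; values are drawn independently from a common distribution in which every element of $X$ has strictly positive probability. Each bidder submits a bid $b_i\in X$. A (pure) strategy is a bidding function $\beta:X\to X$. In the model without ties, bidder $i$ wins iff $b_i>b_j$ for all $j\neq i$ (if the highest bid is tied, nobody wins). In the all-pay auction, a bidder with value $v_i$ bidding $b_i$ gets expected payoff $v_i\Pr(i\text{ wins})-b_i$ (everyone pays their bid). An equilibrium is a profile of bidding functions such that each bidder's bidding function maximises their expected payoff given the others' bidding functions (a pure-strategy Bayes–Nash equilibrium) and such that no bidder uses a weakly dominated bidding function (a bidding function is weakly dominated if some other bidding function yields at least as high expected payoff against every profile of opponents' bidding functions, and strictly higher against some). A symmetric equilibrium (SE) is an equilibrium in which all bidders use the same bidding function $\beta$. *)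

(* Defs.v *)
From mathcomp Require Import all_boot all_order all_algebra.
Set Implicit Arguments. Unset Strict Implicit. Unset Printing Implicit Defensive.
Import Order.TTheory GRing.Theory Num.Theory.
Local Open Scope ring_scope.

(* Grid X = {0,...,x} is 'I_x.+1; values and bids live in it. *)

Definition bidfun (x : nat) := 'I_x.+1 -> 'I_x.+1.
Definition profile (n x : nat) := 'I_n -> bidfun x.

(* model without ties: i wins iff its bid is strictly above all others *)
Definition wins (n : nat) (bids : 'I_n -> nat) (i : 'I_n) : bool :=
  [forall j : 'I_n, (j != i) ==> (bids j < bids i)%N].

Definition allpay_payoff (R : realFieldType) (n x : nat) (p : 'I_x.+1 -> R)
    (prof : profile n x) (i : 'I_n) : R :=
  \sum_(v : {ffun 'I_n -> 'I_x.+1})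
     (\prod_(j : 'I_n) p (v j)) *
     ((nat_of_ord (v i))%:R * (wins (fun j => nat_of_ord (prof j (v j))) i)%:R
      - (nat_of_ord (prof i (v i)))%:R).

Definition upd (n x : nat) (prof : profile n x) (i : 'I_n) (b : bidfun x)
  : profile n x := fun j => if j == i then b else prof j.

Definition weakly_dominated (R : realFieldType) (n x : nat) (p : 'I_x.+1 -> R)
    (i : 'I_n) (b : bidfun x) : Prop :=
  exists b' : bidfun x,
    (forall prof : profile n x,
        allpay_payoff p (upd prof i b) i <= allpay_payoff p (upd prof i b') i) /\
    (exists prof : profile n x,
        allpay_payoff p (upd prof i b) i < allpay_payoff p (upd prof i b') i).

Definition equilibrium (R : realFieldType) (n x : nat) (p : 'I_x.+1 -> R)
    (prof : profile n x) : Prop :=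
  (forall (i : 'I_n) (b' : bidfun x),
      allpay_payoff p (upd prof i b') i <= allpay_payoff p prof i) /\
  (forall i : 'I_n, ~ weakly_dominated p i (prof i)).

Definition symmetric_equilibrium (R : realFieldType) (n x : nat)
    (p : 'I_x.+1 -> R) (beta : bidfun x) : Prop :=
  equilibrium p (fun _ : 'I_n => beta).

(* Main.v *)
Require Import Defs.
From mathcomp Require Import all_boot all_order all_algebra.
From mathcomp Require Import ring lra zify.
Import Order.TTheory GRing.Theory Num.Theory.
Local Open Scope ring_scope.

Section S.
Variables (R : realFieldType) (n x : nat) (p : 'I_x.+1 -> R) (beta : 'I_x.+1 -> 'I_x.+1).

Definition F (c : nat) : R := \sum_(w : 'I_x.+1) p w * (beta w < c)%N%:R.
Definition W (c : nat) : R := F c ^+ n.-1.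

Definition win (i : 'I_n) (v : {ffun 'I_n -> 'I_x.+1}) (c : nat) : bool :=
  [forall j : 'I_n, (j != i) ==> (beta (v j) < c)%N].

Definition G (i : 'I_n) (u : 'I_x.+1) (c : nat) (j : 'I_n) (w : 'I_x.+1) : R :=
  if j == i then (w == u)%:R * p w else p w * (beta w < c)%N%:R.

Lemma prod_bool (i : 'I_n) (b : 'I_n -> bool) :
  \prod_(j | j != i) (b j)%:R = ([forall j, (j != i) ==> b j]%:R : R).
Proof.
case: (boolP [forall j, _]) => [/forallP H|/forallP H].
  by rewrite big1 // => j Hj; move: (H j); rewrite Hj /= => ->.
have [j Hj] : exists j, ~~ ((j != i) ==> b j).
  by apply/existsP; rewrite -negb_forall; apply/forallP.
move: Hj; rewrite negb_imply => /andP [Hji Hb].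
by rewrite (bigD1 j) //= (negbTE Hb) mul0r.
Qed.

Lemma G_pt i u c (v : {ffun 'I_n -> 'I_x.+1}) :
  \prod_j G i u c j (v j) = (v i == u)%:R * (\prod_j p (v j)) * (win i v c)%:R.
Proof.
rewrite (bigD1 i) //= [X in _ = _ * X * _](bigD1 i) //= /G eqxx.
rewrite (eq_bigr (fun j => p (v j) * (beta (v j) < c)%N%:R)); last first.
  by move=> j /negbTE ->.
rewrite big_split /= prod_bool /win; ring.
Qed.

Lemma G_sum i u c :
  \sum_(v : {ffun 'I_n -> 'I_x.+1}) \prod_j G i u c j (v j) = p u * F c ^+ n.-1.
Proof.
rewrite -bigA_distr_bigA (bigD1 i) //=.
rewrite [X in _ * X = _](eq_bigr (fun _ => F c)); last by move=> j Hj; rewrite /G (negbTE Hj).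
rewrite prodr_const cardC1 card_ord /G eqxx (bigD1 u) //= eqxx mul1r big1 ?addr0 //.
by move=> w /negbTE ->; rewrite mul0r.
Qed.


Lemma win_top i v : win i v x.+1.
Proof. by apply/forallP => j; apply/implyP => _; exact: ltn_ord. Qed.

Lemma F_top : \sum_w p w = 1 -> F x.+1 = 1.
Proof.
move=> Hs; rewrite /F -{2}Hs; apply: eq_bigr => w _; by rewrite ltn_ord mulr1.
Qed.

Lemma payoff_formula i (prof : profile n x) :
  (forall j, j != i -> prof j = beta) -> \sum_w p w = 1 ->
  allpay_payoff p prof i =
  \sum_u p u * ((nat_of_ord u)%:R * W (prof i u) - (nat_of_ord (prof i u))%:R).
Proof.
move=> Hprof Hs; rewrite /allpay_payoff.
rewrite (partition_big (fun v : {ffun 'I_n -> 'I_x.+1} => v i) predT) //=.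
apply: eq_bigr => u _.
rewrite big_mkcond /=.
rewrite (eq_bigr (fun v : {ffun 'I_n -> 'I_x.+1} => (nat_of_ord u)%:R * \prod_j G i u (prof i u) j (v j)
     - (nat_of_ord (prof i u))%:R * \prod_j G i u x.+1 j (v j))); last first.
  move=> v _; rewrite !G_pt win_top mulr1.
  case: eqP => [Hv|_]; last by rewrite !mul0r !mulr0 subrr.
  have -> : wins (fun j => nat_of_ord (prof j (v j))) i = win i v (prof i u).
    apply: eq_forallb => j; case: eqP => [//|/eqP Hj] /=.
    by rewrite Hprof // Hv.
  rewrite Hv !mul1r -[\prod_j p (v j)]/(\prod_(j < n) p (v j)); ring.
rewrite big_split /= sumrN -!mulr_sumr !G_sum F_top // expr1n /W; ring.
Qed.


Hypothesis ppos : forall w, 0 < p w.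

Lemma F_ge0 c : 0 <= F c.
Proof. apply: sumr_ge0 => w _; apply: mulr_ge0; [exact: ltW | exact: ler0n]. Qed.

Lemma F_mono c1 c2 : (c1 <= c2)%N -> F c1 <= F c2.
Proof.
move=> H; apply: ler_sum => w _; apply: ler_wpM2l; first exact: ltW.
rewrite ler_nat; case: ltnP => h1 //; case: ltnP => h2 //. lia.
Qed.

Lemma W_mono c1 c2 : (c1 <= c2)%N -> W c1 <= W c2.
Proof.
move=> H; apply: lerXn2r. all: try exact: F_mono. all: by rewrite nnegrE F_ge0.
Qed.

Lemma F_nomass c : (forall w, nat_of_ord (beta w) != c) -> F c.+1 = F c.
Proof.
move=> H; apply: eq_bigr => w _; rewrite ltnS leq_eqVlt (negbTE (H w)) //.
Qed.

Lemma interim_opt (i : 'I_n) : symmetric_equilibrium n p beta -> \sum_w p w = 1 ->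
  forall (u c : 'I_x.+1),
  (nat_of_ord u)%:R * W c - (nat_of_ord c)%:R <=
  (nat_of_ord u)%:R * W (beta u) - (nat_of_ord (beta u))%:R.
Proof.
move=> [H1 _] Hs u c.
pose bf := fun w => if w == u then c else beta w.
have := H1 i bf.
rewrite (payoff_formula i (upd (fun _ => beta) i bf)); last first.
- by [].
- by move=> j Hj; rewrite /upd (negbTE Hj).
rewrite (payoff_formula i (fun _ => beta)) //.
rewrite /upd eqxx (bigD1 u) //= [X in _ <= X](bigD1 u) //= /bf eqxx.
rewrite (eq_bigr (fun w => p w * ((nat_of_ord w)%:R * W (beta w) - (nat_of_ord (beta w))%:R))); last first.
  by move=> w /negbTE ->.
by rewrite lerD2r ler_pM2l.
Qed.

End S.

Theorem lemma10 (R : realFieldType) (n x : nat) (p : 'I_x.+1 -> R)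
  (beta : 'I_x.+1 -> 'I_x.+1) (v : 'I_x.+1) :
  (2 <= n)%N ->
  (forall w, 0 < p w) ->
  \sum_(w : 'I_x.+1) p w = 1 ->
  symmetric_equilibrium n p beta ->
  (v < x)%N ->
  (nat_of_ord (beta (inord v.+1)) <= (nat_of_ord (beta v)).+1)%N.
Proof.
move=> Hn Hp Hs Heq Hv.
have Hn0 : (0 < n)%N by lia.
pose i := Ordinal Hn0.

have Opt := interim_opt R n x p beta Hp i Heq Hs.
set v1 : 'I_x.+1 := inord v.+1.
have Hv1 : nat_of_ord v1 = v.+1 by rewrite /v1 inordK //; lia.
set b := nat_of_ord (beta v).
set b' := nat_of_ord (beta v1).
rewrite leqNgt; apply/negP => Hbb.
have Hb'x : (b' < x.+1)%N by exact: ltn_ord.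
have Hcx : (b'.-1 < x.+1)%N by lia.
pose c : 'I_x.+1 := Ordinal Hcx.
have Hb' : b' = c.+1 by rewrite /= ; lia.
have O1 := Opt v1 c.
rewrite -/b' Hv1 /= Hb' in O1.
have Hbc : (b <= c)%N by rewrite /=; lia.
have M1 := W_mono R n x p beta Hp _ _ (leqnSn c).
have M2 := W_mono R n x p beta Hp _ _ Hbc.
have Ebc : (b%:R : R) + 1 <= (c : nat)%:R by rewrite natr1 ler_nat /=; lia.
move: O1 M1; rewrite -!natr1 => O1 M1.
case: (boolP [exists w, nat_of_ord (beta w) == c]) => [/existsP [w /eqP Hw] | Hno].
- have O2 := Opt w (beta v1).
  have O3 := Opt w (beta v).
  have O4 := Opt v c.
  rewrite -/b' Hb' -natr1 Hw -/b in O2.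
  rewrite Hw -/b in O3.
  rewrite -/b in O4.
  set Wb := W R n x p beta b in O3 O4 M2.
  set Wc := W R n x p beta c in O1 O2 O3 O4 M1 M2.
  set Wb' := W R n x p beta c.+1 in O1 O2 M1.
  have w0 : (0 : R) <= (w : nat)%:R by exact: ler0n.
  have v0 : (0 : R) <= (v : nat)%:R by exact: ler0n.
  have Hvw : ((v : nat)%:R : R) <= (w : nat)%:R by nra.
  have Hwv1 : ((w : nat)%:R : R) <= (v : nat)%:R + 1 by nra.
  rewrite ler_nat in Hvw; rewrite natr1 ler_nat in Hwv1.
  have [Hwv | Hwv] : nat_of_ord w = v \/ nat_of_ord w = v.+1 by lia.
  + have : w = v by apply: val_inj.
    move=> E; rewrite E -/b /= in Hw; lia.
  + have : w = v1 by apply: val_inj => /=; lia.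
    move=> E; rewrite E -/b' Hb' in Hw; lia.
- have Hno' : forall w, nat_of_ord (beta w) != c.
    move=> w; apply/negP => E; move: Hno; rewrite negb_exists => /forallP /(_ w).
    by rewrite E.
  have EF : W R n x p beta c.+1 = W R n x p beta c by rewrite /W F_nomass.
  rewrite EF in O1; lra.
Qed.
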